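(* Let $\Omega\subseteq\mathbb R^3$ be a nonempty open set, $V\in\Omega$ and $k\ge0$. Then $$\{\kappa_{\vec x-V}(\mathbf q_1):\mathbf q_1\in[\Pi^k(\Omega)]^3\}=\{\kappa_{\vec x-V}(\mathbf q_2):\mathbf q_2\in[\Pi^k(\Omega)]^3,\ \operatorname{div}\mathbf q_2=0\}.$$
   Context: $\Pi^k(\Omega)$ denotes the space of polynomials of total degree at most $k$ in $\vec x=(x,y,z)$, restricted to $\Omega$. For $V\in\mathbb R^3$ the Koszul operator is $\kappa_{\vec x-V}(\mathbf a):=(\vec x-V)\times\mathbf a$ for vector fields $\mathbf a$. *)

(* Defs.v *)
From HB Require Import structures.
From mathcomp Require Import all_boot all_order all_algebra.
From mathcomp Require Import reals.
From mathcomp Require Import mpoly.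
Set Implicit Arguments. Unset Strict Implicit. Unset Printing Implicit Defensive.
Import Order.TTheory GRing.Theory Num.Theory.
Local Open Scope ring_scope.

Definition poly3 (R : realType) := mpoly.mpoly 3 R.

(* p has total degree at most k  (msize p = 1 + deg p, and 0 for p = 0) *)
Definition deg_le (R : realType) (k : nat) (p : poly3 R) : bool :=
  (mpoly.msize p <= k.+1)%N.

Definition peval (R : realType) (p : poly3 R) (x : 'rV[R]_3) : R :=
  mpoly.meval (fun i : 'I_3 => x ord0 i) p.

Definition vpeval (R : realType) (q : 'I_3 -> poly3 R) (x : 'rV[R]_3) : 'rV[R]_3 :=
  \row_i peval (q i) x.

Definition polydiv3 (R : realType) (q : 'I_3 -> poly3 R) : poly3 R :=
  \sum_(i < 3) mpoly.mderiv i (q i).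

Definition cross (R : realType) (u v : 'rV[R]_3) : 'rV[R]_3 :=
  let c (w : 'rV[R]_3) (j : nat) := w ord0 (inord j) in
  \row_(i < 3)
    (if (i : nat) == 0%N then c u 1 * c v 2 - c u 2 * c v 1
     else if (i : nat) == 1%N then c u 2 * c v 0 - c u 0 * c v 2
     else c u 0 * c v 1 - c u 1 * c v 0).

Definition koszul (R : realType) (V : 'rV[R]_3) (a : 'rV[R]_3 -> 'rV[R]_3)
  : 'rV[R]_3 -> 'rV[R]_3 :=
  fun x => cross (x - V) (a x).

(* Main.v *)
Require Import Defs.
From HB Require Import structures.
From mathcomp Require Import all_boot all_order all_algebra.
From mathcomp Require Import reals mpoly.
From mathcomp Require Import zify ring.
Import Order.TTheory GRing.Theory Num.Theory.
Local Open Scope ring_scope.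

Section Aux.
Variable R : realType.
Local Notation P := {mpoly R[3]}.

Lemma msize_leP (p : P) k : (forall m, m \in msupp p -> (mdeg m < k)%N) -> (msize p <= k)%N.
Proof. by move=> H; rewrite msizeE; apply/bigmax_leqP_seq => m mp _; exact: H. Qed.

Lemma msize_mderiv (p : P) i : (msize (p^`M(i)) <= (msize p).-1)%N.
Proof.
apply: msize_leP => m; rewrite mcoeff_msupp mcoeff_deriv.
have [->|nz] := eqVneq (p@_(m + U_(i))) 0; first by rewrite mul0rn eqxx.
move=> _; have /msize_mdeg_lt : (m + U_(i))%MM \in msupp p by rewrite mcoeff_msupp.
rewrite mdegD mdeg1 addn1; by case: (msize p).
Qed.

Variable V : 'I_3 -> R.
Definition Lop (g : P) : P := \sum_(i < 3) (g + ('X_i - (V i)%:MP) * g^`M(i)).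

Lemma LopD g1 g2 : Lop (g1 + g2) = Lop g1 + Lop g2.
Proof.
rewrite /Lop -big_split /=; apply: eq_bigr => i _.
rewrite mderivD mulrDr; rewrite -!addrA; congr (_ + _).
by rewrite addrCA !addrA.
Qed.

Lemma LopZ a g : Lop (a *: g) = a *: Lop g.
Proof.
rewrite /Lop scaler_sumr; apply: eq_bigr => i _.
by rewrite mderivZ scalerDr scalerAr.
Qed.

Lemma Lop0 : Lop 0 = 0.
Proof. by rewrite /Lop big1 // => i _; rewrite mderiv0 mulr0 addr0. Qed.

Lemma XiderX i m : 'X_i * ('X_[m] : P)^`M(i) = (m i)%:R *: 'X_[m].
Proof.
rewrite mderivX -scalerAr; have [->|nz] := eqVneq (m i) 0%N; first by rewrite !scale0r.
by rewrite -mpolyXD addmC submK // lep1mP.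
Qed.

Lemma LopX m : Lop 'X_[m] =
  (3 + mdeg m)%:R *: 'X_[m] - \sum_(i < 3) V i *: ('X_[m] : P)^`M(i).
Proof.
rewrite /Lop.
under eq_bigr => i _ do rewrite mulrBl.
under eq_bigr => i _ do rewrite XiderX.
under eq_bigr => i _ do rewrite mul_mpolyC.
under eq_bigr => i _ do rewrite addrA.
rewrite sumrB.
rewrite big_split /=.
rewrite big_const_ord /=.
congr (_ - _).
rewrite -scaler_suml -natr_sum -(mdegE m) (natrD _ 3) scalerDl (scaler_nat (mdeg m)).
congr (_ + _).
by rewrite (scaler_nat 3) !mulrS mulr0n.
Qed.


Lemma Lop_surj n : forall h : P, (msize h <= n)%N -> exists g, (msize g <= n)%N /\ Lop g = h.
Proof.
elim: n => [|n IH] h hs.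
  exists 0; split; first by rewrite msize0.
  have -> : h = 0 by apply/eqP; rewrite -msize_poly_eq0 -leqn0.
  exact: Lop0.
pose S := fun h : P => exists g, (msize g <= n.+1)%N /\ Lop g = h.
have monoS : forall m, (mdeg m < n.+1)%N -> S 'X_[m].
  move=> m dm; set c := ((3 + mdeg m)%:R : R).
  have cnz : c != 0 by rewrite pnatr_eq0.
  set r := \sum_(i < 3) V i *: ('X_[m] : P)^`M(i).
  have rs : (msize (c^-1 *: r) <= n)%N.
    apply: leq_trans (msizeZ_le _ _) _.
    rewrite /r; apply: (leq_trans (msize_sum _ _ _)); apply/bigmax_leqP_seq => i _ _.
    apply: leq_trans (msizeZ_le _ _) _; apply: leq_trans (msize_mderiv _ _) _.
    by rewrite msizeX.
  have [g1 [g1s Lg1]] := IH (c^-1 *: r) rs.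
  exists (c^-1 *: 'X_[m] + g1); split.
    apply: leq_trans (msizeD_le _ _) _; rewrite geq_max (leqW g1s) andbT.
    by apply: leq_trans (msizeZ_le _ _) _; rewrite msizeX.
  by rewrite LopD LopZ LopX Lg1 -/c -/r scalerBr scalerA mulVf // scale1r subrK.
have : S h.
  rewrite (mpolyE h) big_seq; apply: big_ind.
  - by exists 0; rewrite msize0 Lop0.
  - move=> x y [gx [gxs Lx]] [gy [gys Ly]]; exists (gx + gy); split.
      by apply: leq_trans (msizeD_le _ _) _; rewrite geq_max gxs gys.
    by rewrite LopD Lx Ly.
  - move=> m mh; have [g [gs Lg]] := monoS m (leq_trans (msize_mdeg_lt mh) hs).
    exists (h@_m *: g); split; first exact: leq_trans (msizeZ_le _ _) gs.
    by rewrite LopZ Lg.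
by [].
Qed.

Lemma div_q2 (g : P) (q1 : 'I_3 -> P) :
  \sum_(i < 3) (q1 i + ('X_i - (V i)%:MP) * g)^`M(i) = \sum_(i < 3) (q1 i)^`M(i) + Lop g.
Proof.
rewrite /Lop -big_split; apply: eq_bigr => i _ /=.
rewrite mderivD mderivM mderivB mderivC subr0 mderivX mnm1E eqxx.
have -> : (U_(i) - U_(i) = 0)%MM by apply/mnmP => j; rewrite !mnmE subnn.
by rewrite mpolyX0 scale1r mul1r.
Qed.

Lemma msize_q2 k (g q : P) (c : R) i : (msize q <= k.+1)%N -> (msize g <= k)%N ->
  (msize (q + ('X_i - c%:MP) * g) <= k.+1)%N.
Proof.
move=> qs gs; apply: leq_trans (msizeD_le _ _) _; rewrite geq_max qs /=.
have [->|gnz] := eqVneq g 0; first by rewrite mulr0 msize0.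
have [->|pnz] := eqVneq ('X_i - c%:MP : P) 0; first by rewrite mul0r msize0.
rewrite msizeM //.
have : (msize ('X_i - c%:MP : P) <= 2)%N.
  apply: leq_trans (msizeD_le _ _) _; rewrite geq_max msizeX mdeg1 msizeN msizeC /=.
  by case: (c != 0).
move: gs; move: (msize g) (msize ('X_i - c%:MP : P)) => a b ha hb.
lia.
Qed.

Lemma msize_div (q : 'I_3 -> P) k : (forall i, (msize (q i) <= k.+1)%N) ->
  (msize (\sum_(i < 3) (q i)^`M(i)) <= k)%N.
Proof.
move=> qs; apply: (leq_trans (msize_sum _ _ _)); apply/bigmax_leqP_seq => i _ _.
apply: leq_trans (msize_mderiv _ _) _.
by have := qs i; case: (msize (q i)).
Qed.

End Aux.

Lemma cross_add (R : realType) (u a : 'rV[R]_3) (s : R) :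
  cross u (a + s *: u) = cross u a.
Proof.
apply/rowP => i; rewrite !mxE.
by case: ifP => _; [|case: ifP => _]; ring.
Qed.

From mathcomp Require Import all_classical all_reals all_analysis.
Import Order.TTheory GRing.Theory Num.Theory.
Import numFieldNormedType.Exports.
Local Open Scope classical_set_scope.
Local Open Scope ring_scope.

Theorem theorem7p1 (R : realType) (Omega : set 'rV[R]_3) (V : 'rV[R]_3) (k : nat) :
  open Omega -> Omega !=set0 -> Omega V ->
  forall f : 'rV[R]_3 -> 'rV[R]_3,
    (exists q1 : 'I_3 -> poly3 R,
        (forall i, deg_le k (q1 i)) /\
        (forall x, Omega x -> f x = koszul V (vpeval q1) x))
    <->
    (exists q2 : 'I_3 -> poly3 R,
        (forall i, deg_le k (q2 i)) /\
        (forall x, Omega x -> peval (polydiv3 q2) x = 0) /\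
        (forall x, Omega x -> f x = koszul V (vpeval q2) x)).
Proof.
move=> _ _ _ f; split; last first.
  by case=> q2 [q2s [_ fq]]; exists q2.
case=> q1 [q1s fq].
pose Vf := fun i : 'I_3 => V ord0 i.
have hs : (mpoly.msize (- polydiv3 q1) <= k)%N.
  by rewrite mpoly.msizeN; apply: msize_div.
have [g [gs Lg]] := @Lop_surj R Vf _ _ hs.
exists (fun i => q1 i + (mpoly.mpolyX R (mpoly.mnm1 i) - (Vf i)%:MP) * g); split; [|split].
- by move=> i; apply: msize_q2; [exact: q1s|exact: gs].
- by move=> x _; rewrite /polydiv3 div_q2 Lg subrr /peval mpoly.meval0.
- move=> x Ox; rewrite fq // /koszul.
  have -> : vpeval (fun i => q1 i + (mpoly.mpolyX R (mpoly.mnm1 i) - (Vf i)%:MP) * g) x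
          = vpeval q1 x + peval g x *: (x - V).
    apply/rowP => i; rewrite !mxE /peval mpoly.mevalD mpoly.mevalM mpoly.mevalB.
    by rewrite mpoly.mevalXU mpoly.mevalC mulrC.
  by rewrite cross_add.
Qed.
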